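(* Let $\lambda>0$ and $\mu_R,\mu_L,\mu_U>0$. The Markov jump process on $\mathbb{N}^3$, with coordinates $x=(x_R,x_L,x_U)$ and transitions $x\to x+e_R+e_U-e_L$ at rate $\mu_Lx_L$, $x\to x-e_R$ at rate $\mu_Rx_R$, $x\to x-e_U$ at rate $\mu_Ux_U$, and $x\to x+e_L$ at rate $\lambda$, has as invariant distribution the law of $(X+Y_1,Z,X+Y_2)$, where $X,Y_1,Y_2,Z$ are independent Poisson random variables with respective parameters $$\frac{\lambda}{\mu_R+\mu_U},\quad \frac{\lambda\mu_U}{\mu_R(\mu_R+\mu_U)},\quad\frac{\lambda\mu_R}{\mu_U(\mu_R+\mu_U)},\quad\frac{\lambda}{\mu_L}.$$
   Context: $e_R,e_L,e_U$ denote the unit vectors of $\mathbb{N}^3$ for the three coordinates. *)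

(* Defs.v *)
From HB Require Import structures.
From mathcomp Require Import all_boot all_order all_algebra.
From mathcomp Require Import reals.
From mathcomp Require Import sequences.
Set Implicit Arguments. Unset Strict Implicit. Unset Printing Implicit Defensive.
Import Order.TTheory GRing.Theory Num.Theory.
Local Open Scope ring_scope.

Definition state := (nat * nat * nat)%type.
Definition xR (x : state) : nat := x.1.1.
Definition xL (x : state) : nat := x.1.2.
Definition xU (x : state) : nat := x.2.

(* Transition rate q(x,y) of the Markov jump process, for y <> x:
   x -> x + e_R + e_U - e_L  at rate mu_L x_L,
   x -> x - e_R              at rate mu_R x_R,
   x -> x - e_U              at rate mu_U x_U,
   x -> x + e_L              at rate lambda.
   (Truncated subtraction only matters when the corresponding rate is 0.) *)
Definition rate (R : realType) (lam muR muL muU : R) (x y : state) : R :=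
  (y == (xR x + 1, xL x - 1, xU x + 1)%N)%:R * (muL * (xL x)%:R)
+ (y == (xR x - 1, xL x, xU x)%N)%:R * (muR * (xR x)%:R)
+ (y == (xR x, xL x, xU x - 1)%N)%:R * (muU * (xU x)%:R)
+ (y == (xR x, xL x + 1, xU x)%N)%:R * lam.

(* Finite sum over the box of states z with z_i <= y_i + 1, z <> y.
   Every state that can jump to y, and every state y can jump to,
   lies in this box, so these are the full (finite) sums over N^3. *)
Definition box_sum (R : realType) (y : state) (F : state -> R) : R :=
  \sum_(i < (xR y).+2) \sum_(j < (xL y).+2) \sum_(k < (xU y).+2)
     (((i : nat), (j : nat), (k : nat)) != y)%:R * F (i : nat, j : nat, k : nat).

Definition is_invariant_distribution (R : realType) (lam muR muL muU : R) (pi : state -> R) :=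
  (forall x, 0 <= pi x) /\
  (forall y, box_sum y (fun x => pi x * rate lam muR muL muU x y)
             = pi y * box_sum y (fun z => rate lam muR muL muU y z)).

Definition poisson_pmf (R : realType) (m : R) (k : nat) : R :=
  expR (- m) * m ^+ k / (k`!)%:R.

(* Law of (X + Y1, Z, X + Y2) with X, Y1, Y2, Z independent Poisson with
   parameters a, b1, b2, c: its probability mass function. *)
Definition law_XYZ (R : realType) (a b1 b2 c : R) (y : state) : R :=
  poisson_pmf c (xL y) *
  \sum_(k < (minn (xR y) (xU y)).+1)
     poisson_pmf a k * poisson_pmf b1 (xR y - k)%N * poisson_pmf b2 (xU y - k)%N.

(* Main.v *)
Require Import Defs.
From HB Require Import structures.
From mathcomp Require Import all_boot all_order all_algebra.
From mathcomp Require Import reals.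
From mathcomp Require Import sequences.
From mathcomp Require Import exp zify ring.
Import Order.TTheory GRing.Theory Num.Theory.
Local Open Scope ring_scope.

Section Aux.
Variable R : realType.

Lemma pois_succ (m : R) k :
  (k.+1)%:R * poisson_pmf m k.+1 = m * poisson_pmf m k.
Proof.
rewrite /poisson_pmf factS natrM exprS.
have h1 : (k.+1)%:R != 0 :> R by rewrite pnatr_eq0.
have h2 : (k`!)%:R != 0 :> R by rewrite pnatr_eq0 -lt0n fact_gt0.
field.
by rewrite nat1r !pnatr_eq0 -lt0n fact_gt0.
Qed.

Lemma lincomb (c x y : R) (h : x = y) : c * (x - y) = 0.
Proof. by rewrite h subrr mulr0. Qed.

Lemma natr_andb (b c : bool) : (b && c)%:R = b%:R * c%:R :> R.
Proof. by case: b; case: c; rewrite /= ?(mul1r, mul0r, mulr1, mulr0). Qed.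

Definition gg (a b1 b2 : R) (r u : nat) : R :=
  \sum_(k < (minn r u).+1)
     poisson_pmf a k * poisson_pmf b1 (r - k)%N * poisson_pmf b2 (u - k)%N.

Definition GN (a b1 b2 : R) N (r u : nat) : R :=
  \sum_(k < N) ((k <= r) && (k <= u))%N%:R *
     (poisson_pmf a k * poisson_pmf b1 (r - k)%N * poisson_pmf b2 (u - k)%N).

Lemma GN_gg a b1 b2 N r u : (minn r u < N)%N -> GN a b1 b2 N r u = gg a b1 b2 r u.
Proof.
move=> hN; rewrite /gg (big_ord_widen N (fun k : nat => poisson_pmf a k * poisson_pmf b1 (r - k)%N * poisson_pmf b2 (u - k)%N) hN) big_mkcond /GN.
apply: eq_bigr => k _; rewrite ltnS leq_min.
by case: ifP => _; rewrite ?mul1r ?mul0r.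
Qed.

Lemma GN_L1 a b1 b2 N r u :
  (r.+1)%:R * GN a b1 b2 N.+1 r.+1 u =
  (0 < u)%N%:R * a * GN a b1 b2 N r u.-1 + b1 * GN a b1 b2 N.+1 r u.
Proof.
rewrite /GN mulr_sumr.
rewrite (eq_bigr (fun k : 'I_N.+1 =>
   ((k <= r.+1) && (k <= u))%N%:R * (k%:R * (poisson_pmf a k *
       poisson_pmf b1 (r.+1 - k)%N * poisson_pmf b2 (u - k)%N))
   + b1 * (((k <= r) && (k <= u))%N%:R * (poisson_pmf a k *
       poisson_pmf b1 (r - k)%N * poisson_pmf b2 (u - k)%N)))); last first.
  move=> k _.
  case: (ltngtP k r.+1) => hk.
  - have -> : (r.+1 - k = (r - k).+1)%N by lia.
    have -> : (k <= r)%N by lia.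
    have -> : (r.+1)%:R = k%:R + ((r - k).+1)%:R :> R by rewrite -natrD; congr _%:R; lia.
    apply/eqP; rewrite -subr_eq0; apply/eqP.
    rewrite -(@lincomb ((k <= u)%N%:R * poisson_pmf a k * poisson_pmf b2 (u - k)%N) _ _ (pois_succ b1 (r - k))) /=.
    ring.
  - have -> : (k <= r)%N = false by lia.
    by rewrite /= !(mul0r, mulr0, add0r).
  - rewrite hk ltnn /= mul0r mulr0 addr0; ring.
rewrite big_split /= -mulr_sumr; congr (_ + _).
rewrite big_ord_recl /= mul0r mulr0 add0r -mulrA !mulr_sumr.
apply: eq_bigr => k _; rewrite /bump /= add1n.
have -> : (r.+1 - k.+1 = r - k)%N by lia.
have -> : (u - k.+1 = u.-1 - k)%N by lia.
have -> : ((k.+1 <= r.+1) && (k.+1 <= u))%N = ((0 < u) && ((k <= r) && (k <= u.-1)))%N by lia.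
rewrite natr_andb.
apply/eqP; rewrite -subr_eq0; apply/eqP.
rewrite -(@lincomb ((0 < u)%N%:R * ((k <= r) && (k <= u.-1))%N%:R * poisson_pmf b1 (r - k)%N * poisson_pmf b2 (u.-1 - k)%N) _ _ (pois_succ a k)).
ring.
Qed.

Lemma gL1 a b1 b2 r u :
  (r.+1)%:R * gg a b1 b2 r.+1 u =
  (0 < u)%N%:R * a * gg a b1 b2 r u.-1 + b1 * gg a b1 b2 r u.
Proof.
have := GN_L1 a b1 b2 (r + u).+1 r u.
have -> : GN a b1 b2 (r + u).+2 r.+1 u = gg a b1 b2 r.+1 u by apply: GN_gg; lia.
have -> : GN a b1 b2 (r + u).+1 r u.-1 = gg a b1 b2 r u.-1 by apply: GN_gg; lia.
have -> : GN a b1 b2 (r + u).+2 r u = gg a b1 b2 r u by apply: GN_gg; lia.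
by [].
Qed.

Lemma gsym a b1 b2 r u : gg a b1 b2 r u = gg a b2 b1 u r.
Proof. rewrite /gg minnC; apply: eq_bigr => k _; ring. Qed.

Lemma gL2 a b1 b2 r u :
  (u.+1)%:R * gg a b1 b2 r u.+1 =
  (0 < r)%N%:R * a * gg a b1 b2 r.-1 u + b2 * gg a b1 b2 r u.
Proof. by rewrite !(gsym a b1 b2) gL1. Qed.

Lemma gL3 a b1 b2 r u :
  r%:R * gg a b1 b2 r u =
  (0 < r)%N%:R * ((0 < u)%N%:R * a * gg a b1 b2 r.-1 u.-1 + b1 * gg a b1 b2 r.-1 u).
Proof.
case: r => [|r]; first by rewrite /= !mulr0n !mul0r.
by rewrite gL1 /= mul1r.
Qed.

Lemma gL4 a b1 b2 r u :
  u%:R * gg a b1 b2 r u =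
  (0 < u)%N%:R * ((0 < r)%N%:R * a * gg a b1 b2 r.-1 u.-1 + b2 * gg a b1 b2 r u.-1).
Proof.
case: u => [|u]; first by rewrite /= !mulr0n !mul0r.
by rewrite gL2 /= mul1r.
Qed.

Lemma posn (n : nat) : (0 < n)%N%:R * n%:R = n%:R :> R.
Proof. by case: n => [|n]; rewrite /= ?mul1r ?mulr0n ?mul0r. Qed.

Lemma sum_ptc n (a : nat) (c : R) :
  \sum_(i < n) ((i : nat) == a)%:R * c = (a < n)%N%:R * c.
Proof.
elim: n => [|n IH]; first by rewrite big_ord0 /= mulr0n mul0r.
rewrite big_ord_recr /= IH.
case: (ltngtP a n) => h; rewrite ?mulr0n ?mul0r ?addr0 ?add0r.
- by have -> : (a < n.+1)%N = true by lia.
- have -> : (a < n.+1)%N = false by lia.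
  by rewrite mulr0n mul0r.
- by have -> : (a < n.+1)%N = true by lia.
Qed.

Lemma box_pm (y s : state) (w : R) :
  box_sum y (fun z => (z == s)%:R * w) =
  (s.1.1 < (xR y).+2)%N%:R * ((s.1.2 < (xL y).+2)%N%:R *
    ((s.2 < (xU y).+2)%N%:R * ((s != y)%:R * w))).
Proof.
case: s => [[s1 s2] s3] /=; rewrite /box_sum.
rewrite -!sum_ptc.
apply: eq_bigr => i _; rewrite mulr_sumr; apply: eq_bigr => j _.
rewrite !mulr_sumr; apply: eq_bigr => k _.
rewrite !xpair_eqE.
case: (nat_of_ord i =P s1) => [->|_]; case: (nat_of_ord j =P s2) => [->|_]; case: (nat_of_ord k =P s3) => [->|_];
  rewrite /= ?eqxx ?andbF ?mulr0n ?(mul0r, mulr0, mul1r, mulr1) //.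
Qed.

Lemma box_sum_ext y (F G : state -> R) : (forall z, F z = G z) -> box_sum y F = box_sum y G.
Proof.
move=> h; rewrite /box_sum; apply: eq_bigr => i _; apply: eq_bigr => j _; apply: eq_bigr => k _.
by rewrite h.
Qed.

Lemma box_sum4 y p1 p2 p3 p4 (w1 w2 w3 w4 : R) :
  box_sum y (fun z => (z == p1)%:R * w1 + (z == p2)%:R * w2 + (z == p3)%:R * w3 + (z == p4)%:R * w4)
  = box_sum y (fun z => (z == p1)%:R * w1) + box_sum y (fun z => (z == p2)%:R * w2)
  + box_sum y (fun z => (z == p3)%:R * w3) + box_sum y (fun z => (z == p4)%:R * w4).
Proof.
rewrite /box_sum -!big_split; apply: eq_bigr => i _.
rewrite -!big_split; apply: eq_bigr => j _.
rewrite -!big_split; apply: eq_bigr => k _.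
by rewrite !mulrDr.
Qed.

Lemma pm_eval (f : state -> R) x s : (x == s)%:R * f x = (x == s)%:R * f s.
Proof. case: (eqVneq x s) => [->//|_]; by rewrite /= !mulr0n !mul0r. Qed.

Section Rates.
Variables (lam muR muL muU : R) (r l u : nat).

Lemma rin1 (x : state) :
  (((r, l, u) : state) == (xR x + 1, xL x - 1, xU x + 1)%N)%:R * (muL * (xL x)%:R)
  = (x == (r.-1, l.+1, u.-1))%:R * (((0 < r) && (0 < u))%N%:R * (muL * (l.+1)%:R)).
Proof.
case: x => [[a b] c] /=.
transitivity ((((r, l, u) == (a + 1, b - 1, c + 1)%N) && (0 < b)%N)%:R * (muL * b%:R)).
  by rewrite natr_andb -{1}(posn b); ring.
have -> : (((r, l, u) == (a + 1, b - 1, c + 1)%N) && (0 < b)%N)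
   = (((a, b, c) == (r.-1, l.+1, u.-1)) && ((0 < r) && (0 < u))%N) by rewrite !xpair_eqE; lia.
rewrite natr_andb -mulrA.
exact: (pm_eval (fun z => ((0 < r) && (0 < u))%N%:R * (muL * (xL z)%:R)) (a, b, c) (r.-1, l.+1, u.-1)).
Qed.

Lemma rin2 (x : state) :
  (((r, l, u) : state) == (xR x - 1, xL x, xU x)%N)%:R * (muR * (xR x)%:R)
  = (x == (r.+1, l, u))%:R * (muR * (r.+1)%:R).
Proof.
case: x => [[a b] c] /=.
transitivity ((((r, l, u) == (a - 1, b, c)%N) && (0 < a)%N)%:R * (muR * a%:R)).
  by rewrite natr_andb -{1}(posn a); ring.
have -> : (((r, l, u) == (a - 1, b, c)%N) && (0 < a)%N)
   = ((a, b, c) == (r.+1, l, u)) by rewrite !xpair_eqE; lia.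
exact: (pm_eval (fun z => muR * (xR z)%:R) (a, b, c) (r.+1, l, u)).
Qed.

Lemma rin3 (x : state) :
  (((r, l, u) : state) == (xR x, xL x, xU x - 1)%N)%:R * (muU * (xU x)%:R)
  = (x == (r, l, u.+1))%:R * (muU * (u.+1)%:R).
Proof.
case: x => [[a b] c] /=.
transitivity ((((r, l, u) == (a, b, c - 1)%N) && (0 < c)%N)%:R * (muU * c%:R)).
  by rewrite natr_andb -{1}(posn c); ring.
have -> : (((r, l, u) == (a, b, c - 1)%N) && (0 < c)%N)
   = ((a, b, c) == (r, l, u.+1)) by rewrite !xpair_eqE; lia.
exact: (pm_eval (fun z => muU * (xU z)%:R) (a, b, c) (r, l, u.+1)).
Qed.

Lemma rin4 (x : state) :
  (((r, l, u) : state) == (xR x, xL x + 1, xU x)%N)%:R * lam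
  = (x == (r, l.-1, u))%:R * ((0 < l)%N%:R * lam).
Proof.
case: x => [[a b] c] /=.
have -> : ((r, l, u) == (a, b + 1, c)%N)
   = (((a, b, c) == (r, l.-1, u)) && (0 < l)%N) by rewrite !xpair_eqE; lia.
by rewrite natr_andb mulrA.
Qed.

Lemma rate_in (pi : state -> R) x :
  pi x * rate lam muR muL muU x (r, l, u) =
    (x == (r.-1, l.+1, u.-1))%:R * ((((0 < r) && (0 < u))%N%:R * (muL * (l.+1)%:R)) * pi (r.-1, l.+1, u.-1))
  + (x == (r.+1, l, u))%:R * ((muR * (r.+1)%:R) * pi (r.+1, l, u))
  + (x == (r, l, u.+1))%:R * ((muU * (u.+1)%:R) * pi (r, l, u.+1))
  + (x == (r, l.-1, u))%:R * (((0 < l)%N%:R * lam) * pi (r, l.-1, u)).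
Proof.
have e : forall s W, pi x * ((x == s)%:R * W) = (x == s)%:R * (W * pi s).
  move=> s W; rewrite mulrCA (mulrC (pi x)).
  exact: (pm_eval (fun z => W * pi z)).
by rewrite /rate rin1 rin2 rin3 rin4 !mulrDr !e.
Qed.

End Rates.

End Aux.

Lemma core (R : realType) (lam muR muL muU a b1 b2 cc P P1 P0 g g11 gR gU gr gu
   rr uu ll rr1 uu1 ll1 ir iu il : R)
 (Hr1 : rr1 = rr + 1) (Hu1 : uu1 = uu + 1) (Hl1 : ll1 = ll + 1)
 (Ha : (muR + muU) * a = lam) (Hb1 : muR * b1 = muU * a) (Hb2 : muU * b2 = muR * a)
 (Hc : cc * muL = lam)
 (H1 : (rr + 1) * gR = iu * a * gu + b1 * g) (H2 : (uu + 1) * gU = ir * a * gr + b2 * g)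
 (H3 : rr * g = ir * (iu * a * g11 + b1 * gr)) (H4 : uu * g = iu * (ir * a * g11 + b2 * gu))
 (Hc1 : (ll + 1) * P1 = cc * P) (Hc2 : il * lam * P0 = muL * ll * P)
 (Hr : ir * rr = rr) (Hu : iu * uu = uu) (Hl : il * ll = ll) :
 ir * iu * (muL * ll1) * (P1 * g11) + muR * rr1 * (P * gR) + muU * uu1 * (P * gU)
   + il * (il * lam * (P0 * g))
 = P * g * (muL * ll + ir * (muR * rr) + iu * (muU * uu) + lam).
Proof.
rewrite Hr1 Hu1 Hl1.
apply/eqP; rewrite -subr_eq0; apply/eqP.
transitivity (
  - (ir * iu * g11 * P) * ((muR + muU) * a - lam)
  - (P * iu * gu) * (muU * b2 - muR * a)
  - (P * ir * gr) * (muR * b1 - muU * a)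
  + (P * g) * (muR * b1 - muU * a)
  + (P * g) * (muU * b2 - muR * a)
  + (P * g) * ((muR + muU) * a - lam)
  + (ir * iu * g11 * P) * (cc * muL - lam)
  + (ir * iu * muL * g11) * ((ll + 1) * P1 - cc * P)
  + (muR * P) * ((rr + 1) * gR - (iu * a * gu + b1 * g))
  + (muU * P) * ((uu + 1) * gU - (ir * a * gr + b2 * g))
  + (g * muL * P) * (il * ll - ll)
  + (il * g) * (il * lam * P0 - muL * ll * P)
  - (P * muR) * (rr * g - ir * (iu * a * g11 + b1 * gr))
  - (P * muR * g) * (ir * rr - rr)
  - (P * muU) * (uu * g - iu * (ir * a * g11 + b2 * gu))
  - (P * muU * g) * (iu * uu - uu)).
  ring.
rewrite Ha Hb1 Hb2 Hc H1 H2 H3 H4 Hc1 Hc2 Hr Hu Hl !subrr; ring.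
Qed.

Lemma lawE (R : realType) (a b1 b2 c : R) r l u :
  law_XYZ a b1 b2 c (r, l, u) = poisson_pmf c l * @gg R a b1 b2 r u.
Proof. by []. Qed.

Lemma pmf_ge0 (R : realType) (m : R) k : 0 <= m -> 0 <= poisson_pmf m k.
Proof.
move=> hm; rewrite /poisson_pmf; apply: mulr_ge0; last by rewrite invr_ge0 ler0n.
by apply: mulr_ge0; [exact: expR_ge0 | exact: exprn_ge0].
Qed.

Theorem mainTheorem4 (R : realType) (lam muR muL muU : R)
  (hlam : 0 < lam) (hR : 0 < muR) (hL : 0 < muL) (hU : 0 < muU) :
  is_invariant_distribution lam muR muL muU
    (law_XYZ (lam / (muR + muU))
             (lam * muU / (muR * (muR + muU)))
             (lam * muR / (muU * (muR + muU)))
             (lam / muL)).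
Proof.
split.
  move=> [[r l] u]; rewrite /law_XYZ /=.
  apply: mulr_ge0; first by apply: pmf_ge0; rewrite divr_ge0 // ltW.
  apply: sumr_ge0 => k _; apply: mulr_ge0; first apply: mulr_ge0; apply: pmf_ge0.
  - by rewrite divr_ge0 // ltW // addr_gt0.
  - by rewrite divr_ge0 // ltW // ?mulr_gt0 // addr_gt0.
  - by rewrite divr_ge0 // ltW // ?mulr_gt0 // addr_gt0.
move=> [[r l] u].
rewrite (@box_sum_ext R _ _ _ (@rate_in R lam muR muL muU r l u _)).
rewrite /rate !box_sum4 !box_pm /xR /xL /xU /=.
have B1 : forall n, (n.-1 < n.+2)%N = true by move=> n; lia.
have B2 : forall n, (n.+1 < n.+2)%N = true by move=> n; lia.
have B3 : forall n, (n + 1 < n.+2)%N = true by move=> n; lia.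
have B4 : forall n, (n - 1 < n.+2)%N = true by move=> n; lia.
have N1 : ((r.-1, l.+1, u.-1) != (r, l, u)) = true by rewrite !xpair_eqE; lia.
have N2 : ((r.+1, l, u) != (r, l, u)) = true by rewrite !xpair_eqE; lia.
have N3 : ((r, l, u.+1) != (r, l, u)) = true by rewrite !xpair_eqE; lia.
have N4 : ((r, l.-1, u) != (r, l, u)) = (0 < l)%N by rewrite !xpair_eqE; lia.
have O1 : (((r + 1)%N, (l - 1)%N, (u + 1)%N) != (r, l, u)) = true by rewrite !xpair_eqE; lia.
have O2 : (((r - 1)%N, l, u) != (r, l, u)) = (0 < r)%N by rewrite !xpair_eqE; lia.
have O3 : ((r, l, (u - 1)%N) != (r, l, u)) = (0 < u)%N by rewrite !xpair_eqE; lia.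
have O4 : ((r, (l + 1)%N, u) != (r, l, u)) = true by rewrite !xpair_eqE; lia.
rewrite B1 B2 B3 B4 N1 N2 N3 N4 O1 O2 O3 O4 ?B1 ?B2 ?B3 ?B4 ?ltnSn /=.
rewrite !lawE.
have B5 : forall n, (n < n.+2)%N = true by move=> n; lia.
rewrite !B5 /= !mul1r natr_andb.
have hRU : muR + muU != 0 by rewrite gt_eqF // addr_gt0.
have hR0 : muR != 0 by rewrite gt_eqF.
have hU0 : muU != 0 by rewrite gt_eqF.
have hL0 : muL != 0 by rewrite gt_eqF.
apply: (@core R lam muR muL muU (lam / (muR + muU)) (lam * muU / (muR * (muR + muU)))
  (lam * muR / (muU * (muR + muU))) (lam / muL) _ _ _ _ _ _ _ _ _
  r%:R u%:R l%:R (r.+1)%:R (u.+1)%:R (l.+1)%:R (0<r)%N%:R (0<u)%N%:R (0<l)%N%:R).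
- by rewrite natr1.
- by rewrite natr1.
- by rewrite natr1.
- by field.
- field; by rewrite ?hR0 ?hU0 ?hRU.
- field; by rewrite ?hR0 ?hU0 ?hRU.
- by field.
- by rewrite natr1 gL1.
- by rewrite natr1 gL2.
- exact: gL3.
- exact: gL4.
- by rewrite natr1 pois_succ.
- destruct l as [|n]; rewrite /=; first by rewrite !mulr0n !mul0r mulr0 mul0r.
  rewrite mul1r -mulrA pois_succ; field; exact: hL0.
- exact: posn.
- exact: posn.
- exact: posn.
Qed.
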